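(* Let $q_1=(x_1,1/x_1)$, $q_2=(x_2,y_2)$, $q_3=(1/y_3,y_3)$ with $x_1,x_2,y_2,y_3>0$, $x_1<x_2<1/y_3$, $y_3<y_2<1/x_1$ and $x_2y_2<1$. Suppose $$A:=1+(x_2-x_1)\,y_2+\Bigl(\frac1{y_3}-x_2\Bigr)y_3\ \ge\ 2.$$ Then $$T(q_1,q_2)+T(q_2,q_3)\ \ge\ A-1+\sinh(A-1).$$
   Context: For points $p=(x_p,y_p)$ and $q=(x_q,y_q)$ in $(0,\infty)^2$ define $$T(p,q):=\tfrac12\,(y_p-y_q+x_q-x_p)\,(x_p+y_q).$$ (In the paper, $q_1,q_2,q_3$ form a ''double step'' of a normalized tile with hyperbola $xy=1$, where $q_1,q_3$ lie on the hyperbola and $q_2$ lies strictly below it; $A$ is the tile area, $T(q_1,q_2)+T(q_2,q_3)$ its crown area, and the conclusion is $|C_t|/|t|\ge\xi_s(\rho_t)$ with $\rho_t=1/A\le 1/2$.) *)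

(* Defs.v *)
From Stdlib Require Import Reals.
Open Scope R_scope.

Definition T (p q : R * R) : R :=
  / 2 * (snd p - snd q + fst q - fst p) * (fst p + snd q).

(* Main.v *)
Require Import Defs.
From Stdlib Require Import Reals Lra Psatz.
Open Scope R_scope.

Lemma Rdiv_le_0_compat (a b : R) : 0 <= a -> 0 < b -> 0 <= a / b.
Proof. intros. unfold Rdiv. apply Rmult_le_pos; [lra| left; apply Rinv_0_lt_compat; lra]. Qed.

Lemma z5 (r t : R) : 0 < t -> 2*t <= 1 -> 0 < r -> r <= 1 ->
  4 - 5*t + r*(-4*t + 10*t^2 - 4*t^3) + r^2*(t - 6*t^2 + 12*t^3 - 8*t^4) > 0.
Proof. intros Ht Ht2 Hr Hr1.
  assert (H1: 0 <= t*(1-2*t)^3) by (apply Rmult_le_pos; [lra| apply pow_le; lra]).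
  assert (H2: 0 <= 2*t*(2-t)*(1-2*t)) by (apply Rmult_le_pos; [apply Rmult_le_pos|]; lra).
  assert (H3: 2*t*(2-t)*(1-2*t) <= 1) by nra.
  assert (E: t - 6*t^2 + 12*t^3 - 8*t^4 = t*(1-2*t)^3) by ring.
  assert (E2: -4*t + 10*t^2 - 4*t^3 = - (2*t*(2-t)*(1-2*t))) by ring.
  rewrite E, E2. nra. Qed.

Lemma exp_mul_nat (n : nat) (x : R) : exp (INR n * x) = exp x ^ n.
Proof.
  induction n as [|n IH].
  - simpl. rewrite Rmult_0_l. apply exp_0.
  - rewrite S_INR. replace ((INR n + 1) * x) with (INR n * x + x) by ring.
    rewrite exp_plus, IH. simpl. ring.
Qed.

Lemma e_bound : exp 1 <= 279/100.
Proof.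
  assert (H : 19/20 <= exp (-(1/20))) by (pose proof (exp_ineq1_le (-(1/20))); lra).
  assert (H2 : exp (1/20) * exp (-(1/20)) = 1) by (rewrite <- exp_plus; replace (1/20 + - (1/20)) with 0 by ring; apply exp_0).
  assert (H3 : exp (1/20) <= 20/19).
  { pose proof (exp_pos (1/20)). nra. }
  replace 1 with (INR 20 * (1/20)) by (simpl; field).
  rewrite exp_mul_nat.
  pose proof (exp_pos (1/20)) as Hp.
  apply Rle_trans with ((20/19)^20).
  - apply pow_incr; lra.
  - lra.
Qed.

Lemma sinh_bound (D : R) : 0 < D -> D <= 1 ->
  sinh (2 - D) <= (exp 1 / D - D / exp 1) / 2.
Proof.
  intros HD HD1. unfold sinh.
  pose proof (exp_ineq1_le (D - 1)) as H1.
  assert (E1 : exp (2 - D) = exp 1 / exp (D - 1)).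
  { assert (exp (2 - D) * exp (D - 1) = exp 1) by (rewrite <- exp_plus; f_equal; ring).
    pose proof (exp_pos (D-1)). apply (Rmult_eq_reg_r (exp (D - 1))); [|lra].
    rewrite H. field. lra. }
  assert (E2 : exp (- (2 - D)) = exp (D - 1) / exp 1).
  { assert (exp (- (2 - D)) * exp 1 = exp (D - 1)) by (rewrite <- exp_plus; f_equal; ring).
    pose proof (exp_pos 1). apply (Rmult_eq_reg_r (exp 1)); [|lra].
    rewrite H. field. lra. }
  rewrite E1, E2.
  pose proof (exp_pos 1). pose proof (exp_pos (D-1)).
  assert (exp 1 / exp (D - 1) <= exp 1 / D).
  { apply Rmult_le_compat_l; [lra|]. apply Rinv_le_contravar; lra. }
  assert (D / exp 1 <= exp (D - 1) / exp 1).
  { apply Rmult_le_compat_r; [left; apply Rinv_0_lt_compat; lra| lra]. }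
  lra.
Qed.

Lemma final_ineq (D : R) : 0 < D -> D <= 1 ->
  2 - D + sinh (2 - D) <= (2 - D + 4/D - D^2/2) / 2.
Proof.
  intros HD HD1.
  pose proof (sinh_bound D HD HD1). pose proof e_bound.
  pose proof (exp_pos 1). set (E := exp 1) in *.
  assert (HF : E * (/E) = 1) by (field; lra).
  assert (HF2 : 0 < /E) by (apply Rinv_0_lt_compat; lra).
  assert (HE2 : 2 <= E) by (unfold E; pose proof (exp_ineq1_le 1); lra).
  assert (K : E / D - D / E <= 4/D - D^2/2 + D - 2).
  { assert (Hk : D * (4/D - D^2/2 + D - 2 - (E/D - D/E)) = 4 - D^3/2 + D^2 - 2*D - E + D^2 * /E)
      by (field; lra).
    assert (0 < 4 - D^3/2 + D^2 - 2*D - E + D^2 * /E).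
    { assert (/E >= 100/279).
      { replace (100/279) with (/ (279/100)) by field. apply Rle_ge, Rinv_le_contravar; lra. }
      assert (/E <= 1/2) by (replace (1/2) with (/2) by field; apply Rinv_le_contravar; lra).
      nra. }
    assert (0 <= 4/D - D^2/2 + D - 2 - (E/D - D/E)).
    { destruct (Rle_or_lt 0 (4/D - D^2/2 + D - 2 - (E/D - D/E))) as [h|h]; auto. nra. }
    lra. }
  lra.
Qed.

Theorem mainTheorem5 (x1 x2 y2 y3 : R) :
  0 < x1 -> 0 < x2 -> 0 < y2 -> 0 < y3 ->
  x1 < x2 -> x2 < / y3 ->
  y3 < y2 -> y2 < / x1 ->
  x2 * y2 < 1 ->
  2 <= 1 + (x2 - x1) * y2 + (/ y3 - x2) * y3 ->
  let A := 1 + (x2 - x1) * y2 + (/ y3 - x2) * y3 in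
  T (x1, / x1) (x2, y2) + T (x2, y2) (/ y3, y3) >= A - 1 + sinh (A - 1).
Proof.
  intros H1 H2 H3 H4 H5 H6 H7 H8 H9 H10 A.
  unfold T; cbn [fst snd].
  assert (HA0 : A = 3 - (1 - x2*y2 + x1*y2 + x2*y3)).
  { unfold A. replace ((/ y3 - x2) * y3) with (1 - x2*y3). ring.
    rewrite Rmult_minus_distr_r, Rinv_l; lra. }
  assert (HC0 : 2 * (/ 2 * (/ x1 - y2 + x2 - x1) * (x1 + y2) +
      / 2 * (y2 - y3 + / y3 - x2) * (x2 + y3)) = 4 - 2*(1 - x2*y2 + x1*y2 + x2*y3)
      + (y2^2 * (1 - x1*y2)/(x1*y2) + x2*y3*(x2*y2 - x2*y3)/x2^2
         + (x1*y2*(x2*y2 - x1*y2)/y2^2 + x2^2*(1 - x2*y3)/(x2*y3)))).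
  { field. lra. }
  assert (H10' : 2 <= A) by exact H10.
  clearbody A.
  set (al := x1 * y2). set (be := x2 * y3). set (r := x2 * y2).
  set (D := 1 - r + al + be).
  assert (HA : A = 3 - D) by exact HA0.
  assert (Hal : 0 < al) by (unfold al; nra).
  assert (Hbe : 0 < be) by (unfold be; nra).
  assert (Halr : al < r) by (unfold al, r; nra).
  assert (Hber : be < r) by (unfold be, r; nra).
  assert (HD1 : D <= 1) by (rewrite HA0 in H10'; unfold D, r, al, be; lra).
  assert (Hr1 : r < 1) by exact H9.
  assert (HD0 : 0 < D) by (unfold D; lra).
  set (s := al + be). set (pi := al * be). set (w := s / 2). set (pi0 := s^2/4).
  set (T1 := y2^2 * (1 - al)/al + be*(r - be)/x2^2).
  set (T2 := al*(r - al)/y2^2 + x2^2*(1 - be)/be).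
  set (G := r*(1-w)/w + w*(r-w)/r).
  set (K := D - 2 + 4/D - D^2/2).
  assert (HC : 2 * (/ 2 * (/ x1 - y2 + x2 - x1) * (x1 + y2) +
      / 2 * (y2 - y3 + / y3 - x2) * (x2 + y3)) = 4 - 2*D + (T1 + T2)).
  { exact HC0. }
  assert (Hr : 0 < r) by lra.

  assert (Hsr : s <= r) by (unfold s, D in *; lra).
  assert (HT1 : 0 < T1).
  { unfold T1. assert (0 < y2^2 * (1-al)/al) by (apply Rdiv_lt_0_compat; [apply Rmult_lt_0_compat; [apply pow_lt; lra| lra] | lra]).
    assert (0 < be*(r-be)/x2^2) by (apply Rdiv_lt_0_compat; [apply Rmult_lt_0_compat; lra | apply pow_lt; lra]). lra. }
  assert (HT2 : 0 < T2).
  { unfold T2. assert (0 < al*(r-al)/y2^2) by (apply Rdiv_lt_0_compat; [apply Rmult_lt_0_compat; lra | apply pow_lt; lra]).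
    assert (0 < x2^2*(1-be)/be) by (apply Rdiv_lt_0_compat; [apply Rmult_lt_0_compat; [apply pow_lt; lra| lra] | lra]). lra. }
  assert (Hpi : 0 < pi) by (unfold pi; nra).
  assert (Hs : 0 < s) by (unfold s; lra).
  assert (Hpi0 : 0 < pi0) by (unfold pi0; nra).
  assert (Hw : 0 < w) by (unfold w; lra).
  assert (HFp : T1 * T2 = 2*r - (1+r)*s + s^2 + r^2 + r^2*(1-s)/pi - pi*(1+s/r) + pi^2/r^2).
  { unfold T1, T2, s, pi, r. unfold al, be. field. repeat split; nra. }
  assert (HFG : 2*r - (1+r)*s + s^2 + r^2 + r^2*(1-s)/pi - pi*(1+s/r) + pi^2/r^2 - G^2
     = (pi0 - pi) * (r^2*(1-s)/(pi*pi0) + (1 + s/r) - (pi+pi0)/r^2)).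
  { unfold G, w, pi0. field. repeat split; lra. }
  assert (Hpp : pi <= pi0).
  { assert (E : pi0 - pi = (al - be)^2/4) by (unfold pi0, pi, s; field).
    pose proof (pow2_ge_0 (al - be)). lra. }
  assert (Hbr : 0 <= r^2*(1-s)/(pi*pi0) + (1 + s/r) - (pi+pi0)/r^2).
  { assert (0 <= r^2*(1-s)/(pi*pi0)) by (apply Rdiv_le_0_compat; [apply Rmult_le_pos; [apply pow_le| ]; lra | apply Rmult_lt_0_compat; lra]).
    assert (0 <= s/r) by (apply Rdiv_le_0_compat; lra).
    assert ((pi+pi0)/r^2 <= 1).
    { apply (Rmult_le_reg_r (r^2)); [nra|]. unfold Rdiv. rewrite Rmult_assoc, Rinv_l; [|nra].
      unfold pi0 in *. nra. }
    lra. }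
  assert (HTG : G^2 <= T1 * T2) by nra.
  assert (HG : 0 < G).
  { unfold G. assert (0 < r*(1-w)/w) by (apply Rdiv_lt_0_compat; unfold w in *; nra).
    assert (0 <= w*(r-w)/r) by (apply Rdiv_le_0_compat; unfold w in *; nra). lra. }
  assert (HY : 2 * G <= T1 + T2).
  { assert (Hsq : (2*G)^2 <= (T1+T2)^2).
    { pose proof (pow2_ge_0 (T1 - T2)).
      assert (E : (T1+T2)^2 = (T1-T2)^2 + 4*(T1*T2)) by ring.
      assert (E2 : (2*G)^2 = 4 * G^2) by ring. lra. }
    destruct (Rle_or_lt (2*G) (T1+T2)) as [h|h]; auto.
    assert ((T1+T2)^2 < (2*G)^2) by (apply pow_lt_compat_l; [lra|lia] || nra). lra. }
  assert (HGK : K <= 2 * G).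
  { set (t := w / r).
    assert (Ht : 0 < t) by (unfold t; apply Rdiv_lt_0_compat; lra).
    assert (Ht2 : 2 * t <= 1).
    { unfold t. apply (Rmult_le_reg_r r); [lra|]. unfold Rdiv.
      replace (2 * (w * / r) * r) with (2 * w) by (field; lra). unfold w; lra. }
    pose proof (z5 r t Ht Ht2 Hr (Rlt_le _ _ Hr1)) as HZ.
    assert (Hid : 2*G - K = (1-r)*r^2*(4 - 5*t + r*(-4*t + 10*t^2 - 4*t^3) + r^2*(t - 6*t^2 + 12*t^3 - 8*t^4)) / (2*w*r*D)).
    { unfold G, K, t. replace D with (1 - r + 2*w) by (unfold w, s, D; field).
      field. repeat split; lra. }
    assert (0 <= (1-r)*r^2*(4 - 5*t + r*(-4*t + 10*t^2 - 4*t^3) + r^2*(t - 6*t^2 + 12*t^3 - 8*t^4)) / (2*w*r*D)).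
    { apply Rdiv_le_0_compat.
      - apply Rmult_le_pos; [apply Rmult_le_pos; [lra| apply pow_le; lra]| lra].
      - apply Rmult_lt_0_compat; [apply Rmult_lt_0_compat; [lra|] |]; lra. }
    lra. }
  pose proof (final_ineq D HD0 HD1) as HF.
  rewrite HA. replace (3 - D - 1) with (2 - D) by ring.
  assert (HKe : 4 - 2*D + K = 2 - D + 4/D - D^2/2) by (unfold K; ring).
  apply Rle_ge. unfold K in HGK. lra.
Qed.
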